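(* Let $R$ be a ring, $\mathfrak a\in\mathrm{Ass}_l(R)$, $S\in\mathrm{Den}_l(R,\mathfrak a)$ and $A=S^{-1}R$. Then $A=Q_{\mathfrak a}(R)$ (i.e. the natural ring homomorphism $S^{-1}R\to S_{\mathfrak a}(R)^{-1}R$, $s^{-1}r\mapsto s^{-1}r$, is an isomorphism) if and only if $Q_l(A)=A$ (i.e. the natural embedding $A\to Q_l(A)$ is an isomorphism).
   Context: Rings are associative with $1$. A multiplicatively closed subset $S$ ($1\in S$, $0\notin S$) is a left Ore set if $Sr\cap Rs\ne\emptyset$ for all $r\in R,s\in S$; $\mathrm{ass}(S):=\{r\mid sr=0\text{ for some }s\in S\}$; it is a left denominator set if moreover $rs=0$ ($s\in S$) implies $tr=0$ for some $t\in S$. $\mathrm{Den}_l(R)$ is the set of left denominator sets, $\mathrm{Ass}_l(R)=\{\mathrm{ass}(S)\mid S\in\mathrm{Den}_l(R)\}$, $\mathrm{Den}_l(R,\mathfrak a)=\{S\mid\mathrm{ass}(S)=\mathfrak a\}$; $S_{\mathfrak a}(R)$ is the largest element of $\mathrm{Den}_l(R,\mathfrak a)$ and $Q_{\mathfrak a}(R):=S_{\mathfrak a}(R)^{-1}R$. For a ring $B$, $Q_l(B):=S_0(B)^{-1}B$ where $S_0(B)$ is the largest element of $\mathrm{Den}_l(B,0)$. *)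

(* Defs.v *)
From HB Require Import structures.
From mathcomp Require Import all_boot all_order all_algebra.
Set Implicit Arguments. Unset Strict Implicit. Unset Printing Implicit Defensive.
Import GRing.Theory.
Local Open Scope ring_scope.

Definition mult_closed (R : nzRingType) (S : R -> Prop) : Prop :=
  S 1 /\ ~ S 0 /\ (forall s t, S s -> S t -> S (s * t)).

Definition left_ore (R : nzRingType) (S : R -> Prop) : Prop :=
  forall r s, S s -> exists s' r', S s' /\ s' * r = r' * s.

Definition ass (R : nzRingType) (S : R -> Prop) (r : R) : Prop :=
  exists s, S s /\ s * r = 0.

Definition left_den (R : nzRingType) (S : R -> Prop) : Prop :=
  [/\ mult_closed S, left_ore S &
      forall r s, S s -> r * s = 0 -> exists t, S t /\ t * r = 0].

Definition den_l_at (R : nzRingType) (a : R -> Prop) (S : R -> Prop) : Prop :=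
  left_den S /\ (forall r, ass S r <-> a r).

Definition largest_den (R : nzRingType) (a : R -> Prop) (T : R -> Prop) : Prop :=
  den_l_at a T /\
  (forall S', den_l_at a S' -> forall x, S' x -> T x).

Definition zero_ideal (R : nzRingType) (r : R) : Prop := r = 0.

(* sigma : R -> A is a left localization of R at the left denominator set S,
   i.e. (A, sigma) is (a model of) the left ring of fractions S^{-1}R:
   sigma(S) consists of units, every element is sigma(s)^{-1} sigma(r),
   and ker sigma = ass(S). *)
Definition left_localization (R A : nzRingType) (S : R -> Prop)
    (sigma : {rmorphism R -> A}) : Prop :=
  [/\ forall s, S s -> exists u, u * sigma s = 1 /\ sigma s * u = 1,
      forall x : A, exists s r, S s /\ sigma s * x = sigma r &
      forall r, sigma r = 0 <-> ass S r].

(* Main.v *)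
Require Import Defs.
From HB Require Import structures.
From mathcomp Require Import all_boot all_order all_algebra.
From Stdlib Require Import IndefiniteDescription.
Set Implicit Arguments. Unset Strict Implicit.
Local Open Scope ring_scope.
Import GRing.Theory.

Definition isunit (X : nzRingType) (a : X) := exists u, u * a = 1 /\ a * u = 1.

Lemma unit_lcancel (X : nzRingType) (a y y' : X) :
  isunit a -> a * y = a * y' -> y = y'.
Proof.
move=> [u [ua au]] e.
by rewrite -[y]mul1r -[y']mul1r -ua -!mulrA e.
Qed.

Lemma isunitM (X : nzRingType) (a b : X) : isunit a -> isunit b -> isunit (a * b).
Proof.
move=> [u [ua au]] [v [vb bv]]; exists (v * u); split.
  by rewrite mulrA -(mulrA v) ua mulr1 vb.
by rewrite mulrA -(mulrA a) bv mulr1 au.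
Qed.

Section Gen.
Variables (R : nzRingType) (S : R -> Prop) (HS : left_den S)
  (X Y : nzRingType) (f : {rmorphism R -> X}) (g : {rmorphism R -> Y}).
Hypotheses (hf : forall s, S s -> isunit (f s)) (hg : forall s, S s -> isunit (g s))
  (kf : forall r, f r = 0 -> g r = 0)
  (hfs : forall x : X, exists s r, S s /\ f s * x = f r).

Definition Rel x y := exists s r, S s /\ f s * x = f r /\ g s * y = g r.

Lemma SM s t : S s -> S t -> S (s * t).
Proof. by case: HS => [[_ [_ h]] _ _]; apply: h. Qed.

Lemma Ore r s : S s -> exists s' r', S s' /\ s' * r = r' * s.
Proof. by case: HS => [_ h _]; apply: h. Qed.

Lemma rel_func x y s r : Rel x y -> S s -> f s * x = f r -> g s * y = g r.
Proof.
move=> [s0 [r0 [Ss0 [e1 e2]]]] Ss e.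
have [s' [r' [Ss' e3]]] := Ore s0 Ss.
have E1 : f (s' * r0 - r' * r) = 0.
  by rewrite rmorphB !rmorphM -e1 -e !mulrA -!rmorphM e3 subrr.
have E2 := kf E1.
move: E2; rewrite rmorphB !rmorphM -e2 mulrA -[g s' * g s0]rmorphM e3 rmorphM -mulrA -mulrBr => E2.

have Uw : isunit (g (s' * s0)) by apply: hg; apply: SM.
case: Uw => [wi [wiw wwi]].
have [u [ug gu]] := hg Ss.
have wu : wi * g r' = u.
  by rewrite -[wi * _]mulr1 -gu mulrA -(mulrA wi) -rmorphM -e3 wiw mul1r.
have : u * (g s * y - g r) = 0 by rewrite -wu -mulrA E2 mulr0.
by rewrite mulrBr mulrA ug mul1r => /eqP; rewrite subr_eq0 => /eqP ->; rewrite mulrA gu mul1r.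
Qed.

Lemma rel_uniq x y y' : Rel x y -> Rel x y' -> y = y'.
Proof.
move=> H [s [r [Ss [e1 e2]]]].
apply: (unit_lcancel (hg Ss)); rewrite e2; exact: rel_func H Ss e1.
Qed.

Lemma rel_ex x : exists y, Rel x y.
Proof.
have [s [r [Ss e]]] := hfs x.
have [u [ug gu]] := hg Ss.
exists (u * g r), s, r; split => //; split => //.
by rewrite mulrA gu mul1r.
Qed.

Lemma common x1 x2 : exists s r1 r2, [/\ S s, f s * x1 = f r1 & f s * x2 = f r2].
Proof.
have [s1 [r1 [Ss1 e1]]] := hfs x1.
have [s2 [r2 [Ss2 e2]]] := hfs x2.
have [s' [r' [Ss' e3]]] := Ore s1 Ss2.
exists (s' * s1), (s' * r1), (r' * r2); split.
- exact: SM.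
- by rewrite !rmorphM -mulrA e1.
- by rewrite e3 !rmorphM -mulrA e2.
Qed.

Lemma rel_sub x1 y1 x2 y2 : Rel x1 y1 -> Rel x2 y2 -> Rel (x1 - x2) (y1 - y2).
Proof.
move=> H1 H2.
have [s [r1 [r2 [Ss e1 e2]]]] := common x1 x2.
exists s, (r1 - r2); split => //; split.
  by rewrite mulrBr e1 e2 rmorphB.
by rewrite mulrBr (rel_func H1 Ss e1) (rel_func H2 Ss e2) rmorphB.
Qed.

Lemma rel_mul x1 y1 x2 y2 : Rel x1 y1 -> Rel x2 y2 -> Rel (x1 * x2) (y1 * y2).
Proof.
move=> [s1 [r1 [Ss1 [e1 e1']]]] [s2 [r2 [Ss2 [e2 e2']]]].
have [s' [r' [Ss' e3]]] := Ore r1 Ss2.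
exists (s' * s1), (r' * r2); split; first exact: SM.
split.
  by rewrite !rmorphM !mulrA -(mulrA (f s')) e1 -[f s' * f r1]rmorphM e3 rmorphM -mulrA e2.
by rewrite !rmorphM !mulrA -(mulrA (g s')) e1' -[g s' * g r1]rmorphM e3 rmorphM -mulrA e2'.
Qed.

Lemma rel_img r : Rel (f r) (g r).
Proof.
case: HS => [[S1 _] _ _].
by exists 1, r; rewrite !rmorph1 !mul1r.
Qed.

Lemma rel_one : Rel 1 1.
Proof. by have := rel_img 1; rewrite !rmorph1. Qed.

Definition phi0 (x : X) : Y := proj1_sig (constructive_indefinite_description _ (rel_ex x)).

Lemma phi0P x : Rel x (phi0 x).
Proof. by rewrite /phi0; case: constructive_indefinite_description. Qed.

Lemma phi0B x y : phi0 (x - y) = phi0 x - phi0 y.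
Proof. apply: rel_uniq (phi0P _) (rel_sub (phi0P _) (phi0P _)). Qed.
Lemma phi0M x y : phi0 (x * y) = phi0 x * phi0 y.
Proof. apply: rel_uniq (phi0P _) (rel_mul (phi0P _) (phi0P _)). Qed.
Lemma phi01 : phi0 1 = 1.
Proof. by apply: rel_uniq (phi0P _) rel_one. Qed.

Definition phiR : {rmorphism X -> Y} :=
  HB.pack phi0 (GRing.isZmodMorphism.Build X Y phi0 phi0B)
         (GRing.isMonoidMorphism.Build X Y phi0 (conj phi01 phi0M)).

Lemma phiRP x : Rel x (phiR x).
Proof. have e : phiR x = phi0 x by reflexivity. by rewrite e; apply: phi0P. Qed.

End Gen.

Lemma units_den (A : nzRingType) : den_l_at (@zero_ideal A) (fun a => isunit a).
Proof.
split; first split.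
- split; first by exists 1; rewrite mulr1.
  split; first by move=> [u [h _]]; move: h; rewrite mulr0 => /eqP; rewrite eq_sym oner_eq0.
  by move=> s t; apply: isunitM.
- move=> r s [u [us su]]; exists 1, (r * u); split; first by exists 1; rewrite mulr1.
  by rewrite mul1r -mulrA us mulr1.
- move=> r s [u [us su]] e; exists 1; split; first by exists 1; rewrite mulr1.
  by rewrite mul1r -[r]mulr1 -su mulrA e mul0r.
- move=> r; split.
    by move=> [s [Us e]]; rewrite /zero_ideal; apply: (unit_lcancel Us); rewrite e mulr0.
  by move=> ->; exists 1; split; [exists 1; rewrite mulr1 | rewrite mulr0].
Qed.

Lemma inj_surj_bij (A B : Type) (h : A -> B) :
  injective h -> (forall y, exists x, h x = y) -> bijective h.
Proof.
move=> hi hs.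
pose k y := proj1_sig (constructive_indefinite_description _ (hs y)).
have hk : forall y, h (k y) = y.
  by move=> y; rewrite /k; case: constructive_indefinite_description.
by exists k => [x|y]; [apply: hi; rewrite hk | apply: hk].
Qed.

Lemma bij_unit (A B : nzRingType) (h : {rmorphism A -> B}) (a : A) :
  bijective h -> isunit (h a) -> isunit a.
Proof.
move=> [k hk kh] [v [va av]].
have hi : injective h by apply: can_inj hk.
exists (k v); split; apply: hi; rewrite rmorphM kh ?va ?av rmorph1 //.
Qed.

Theorem theorem3p10
    (R : nzRingType) (S : R -> Prop) (HS : left_den S)
    (* T = S_a(R) for a = ass(S) *)
    (T : R -> Prop) (HT : largest_den (ass S) T)
    (* A = S^{-1}R *)
    (A : nzRingType) (sigma : {rmorphism R -> A})
    (Hsigma : left_localization S sigma)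
    (* Q = Q_a(R) = S_a(R)^{-1}R *)
    (Q : nzRingType) (tau : {rmorphism R -> Q})
    (Htau : left_localization T tau)
    (* U = S_0(A), B = Q_l(A) = S_0(A)^{-1}A, rho the natural map A -> Q_l(A) *)
    (U : A -> Prop) (HU : largest_den (@zero_ideal A) U)
    (B : nzRingType) (rho : {rmorphism A -> B})
    (Hrho : left_localization U rho) :
  (exists phi : {rmorphism A -> Q},
      (forall r, phi (sigma r) = tau r) /\ bijective phi)
  <-> bijective rho.
Proof.
case: HT => [[_ Tass] Tmax].
case: Hsigma => [sig1 sig2 sig3].
case: Htau => [tau1 tau2 tau3].
case: HU => [[[[U1 [U0 UM]] UO UR] Uass] Umax].
case: Hrho => [rho1 rho2 rho3].
have ST : forall x, S x -> T x := Tmax S (conj HS (fun r => iff_refl _)).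
have kerS : forall r, sigma r = 0 <-> ass S r := sig3.
have kerT : forall r, tau r = 0 <-> ass S r := fun r => iff_trans (tau3 r) (Tass r).
have unitsU : forall a, isunit a -> U a := Umax _ (units_den A).
have sigU : forall s, S s -> U (sigma s) := fun s Ss => unitsU _ (sig1 s Ss).
have UassE : forall a, ass U a -> a = 0 := fun a h => proj1 (Uass a) h.
have rhobij : (forall u, U u -> isunit u) -> bijective rho.
  move=> Uunit; apply: inj_surj_bij.
  - move=> a b e; apply/eqP; rewrite -subr_eq0; apply/eqP; apply: UassE.
    by apply/rho3; rewrite rmorphB e subrr.
  - move=> b; have [u [a [Uu e]]] := rho2 b; have [v [vu uv]] := Uunit u Uu.
    by exists (v * a); rewrite rmorphM -e mulrA -rmorphM vu rmorph1 mul1r.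
split.
- move=> [phi [phiE phibij]]; apply: rhobij => u Uu.
  have [s [r [Ss e]]] := sig2 u.
  pose V := fun r => U (sigma r).
  have HV : den_l_at (ass S) V.
    split; first split.
    + split; first by rewrite /V rmorph1.
      split; first by rewrite /V rmorph0.
      by move=> a b; rewrite /V rmorphM; apply: (UM).
    + move=> r0 v Vv; have [u' [a' [Uu' e1]]] := UO (sigma r0) (sigma v) Vv.
      have [s1 [p [q [Ss1 ep eqq]]]] := common HS sig2 u' a'.
      have : sigma (p * r0 - q * v) = 0.
        by rewrite rmorphB !rmorphM -ep -eqq -!mulrA e1 subrr.
      move/kerS => [s0 [Ss0 e0]].
      exists (s0 * p), (s0 * q); split.
        rewrite /V rmorphM -ep; apply: (UM); first exact: sigU.
        by apply: (UM) => //; exact: sigU.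
      by apply/eqP; rewrite -subr_eq0 -!mulrA -mulrBr e0.
    + move=> r0 v Vv e0.
      have : sigma r0 * sigma v = 0 by rewrite -rmorphM e0 rmorph0.
      move/(UR _ _ Vv) => [t [Ut et]].
      have : sigma r0 = 0 by apply: UassE; exists t.
      move/kerS => [s0 [Ss0 e1]]; exists s0; split => //.
      by rewrite /V; apply: sigU.
    + move=> r0; split.
        move=> [v [Vv e0]]; apply/kerS; apply: UassE; exists (sigma v); split => //.
        by rewrite -rmorphM e0 rmorph0.
      move=> [s0 [Ss0 e0]]; exists s0; split => //.
      by rewrite /V; apply: sigU.
  have Tr : T r.
    apply: (Tmax V HV); rewrite /V -e; apply: (UM) => //; exact: sigU.
  have ur : isunit (sigma r).
    by apply: (bij_unit phibij); rewrite phiE; exact: tau1.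
  have [z [zs sz]] := sig1 s Ss.
  have -> : u = z * sigma r by rewrite -e mulrA zs mul1r.
  by apply: isunitM => //; exists (sigma s).
- move=> rhobij0.
  have Uunit : forall u, U u -> isunit u := fun u Uu => bij_unit rhobij0 (rho1 u Uu).
  have hg : forall s, S s -> isunit (tau s) := fun s Ss => tau1 s (ST s Ss).
  have kf : forall r, sigma r = 0 -> tau r = 0 :=
    fun r h => proj2 (kerT r) (proj1 (kerS r) h).
  have kg : forall r, tau r = 0 -> sigma r = 0 :=
    fun r h => proj2 (kerS r) (proj1 (kerT r) h).
  pose phi := phiR HS hg kf sig2.
  have phiP : forall x, Rel S sigma tau x (phi x) := phiRP HS hg kf sig2.
  have phiE : forall r, phi (sigma r) = tau r :=
    fun r => rel_uniq HS hg kf (phiP _) (rel_img HS sigma tau r).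
  have phiinj : injective phi.
    move=> a b e; have h1 := phiP a; have h2 := phiP b; rewrite -e in h2.
    have sw : forall x y, Rel S sigma tau x y -> Rel S tau sigma y x.
      by move=> x y [s [r [Ss [e1 e2]]]]; exists s, r.
    have sig1u : forall s, S s -> isunit (sigma s) := sig1.
    exact: (rel_uniq HS sig1u kg (sw _ _ h1) (sw _ _ h2)).
  exists phi; split => //.
  pose W := fun a => isunit (phi a).
  have HW : den_l_at (@zero_ideal A) W.
    split; first split.
    + split; first by rewrite /W rmorph1; exists 1; rewrite mulr1.
      split.
        rewrite /W rmorph0 => [[v [h _]]]; move: h; rewrite mulr0 => /eqP.
        by rewrite eq_sym oner_eq0.
      by move=> a b; rewrite /W rmorphM; apply: isunitM.
    + move=> a w [vw [vw1 vw2]].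
      have [t [q [Tt e]]] := tau2 (phi a * vw).
      exists (sigma t), (sigma q); split; first by rewrite /W phiE; exact: tau1.
      by apply: phiinj; rewrite !rmorphM !phiE -e -!mulrA vw1 mulr1.
    + move=> a w [vw [vw1 vw2]] e.
      exists 1; split; first by rewrite /W rmorph1; exists 1; rewrite mulr1.
      rewrite mul1r; apply: phiinj; rewrite rmorph0.
      have h : phi a * phi w = 0 by rewrite -rmorphM e rmorph0.
      by rewrite -[phi a]mulr1 -vw2 mulrA h mul0r.
    + move=> a; split.
        move=> [w [Ww e]]; rewrite /zero_ideal; apply: phiinj; rewrite rmorph0.
        by apply: (unit_lcancel Ww); rewrite -rmorphM e rmorph0 mulr0.
      rewrite /zero_ideal => ->; exists 1; split; last by rewrite mulr0.
      by rewrite /W rmorph1; exists 1; rewrite mulr1.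
  have Wsub := Umax W HW.
  apply: inj_surj_bij => // y.
  have [t [r [Tt e]]] := tau2 y.
  have Wt : W (sigma t) by rewrite /W phiE; exact: tau1.
  have [z [zs sz]] := Uunit _ (Wsub _ Wt).
  exists (z * sigma r).
  by rewrite rmorphM phiE -e mulrA -(phiE t) -rmorphM zs rmorph1 mul1r.
Qed.
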